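(* Let $3\le n\le m$ and let $G=P_n\square P_m$ be the grid graph. Then every minimal resolving set of $G$ has cardinality at most $2n-2$, and there exists a minimal resolving set of $G$ of cardinality exactly $2n-2$; that is, the largest cardinality of a minimal resolving set of $G$ is $2n-2$.
   Context: The grid graph $P_n\square P_m$ has vertex set $\{(i,j):0\le i\le n-1,\ 0\le j\le m-1\}$, with $(i,j)$ adjacent to $(k,l)$ iff $|i-k|+|j-l|=1$; the distance is $d((i,j),(k,l))=|i-k|+|j-l|$. A vertex $w$ resolves two vertices $u,v$ if $d(w,u)\ne d(w,v)$. A set $R$ of vertices is resolving if every pair of distinct vertices is resolved by some vertex of $R$. A minimal resolving set is a resolving set $R$ such that no $R\setminus\{v\}$, $v\in R$, is resolving. *)

(* Defs.v *)
From mathcomp Require Import all_boot all_order.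
Set Implicit Arguments. Unset Strict Implicit. Unset Printing Implicit Defensive.

Definition gvert (n m : nat) := ('I_n * 'I_m)%type.

Definition absdiff (a b : nat) : nat := (a - b) + (b - a).

(* Graph distance in the grid: d((i,j),(k,l)) = |i-k| + |j-l|. *)
Definition gdist (n m : nat) (u v : gvert n m) : nat :=
  absdiff u.1 v.1 + absdiff u.2 v.2.

Definition resolves (n m : nat) (w u v : gvert n m) : bool :=
  gdist w u != gdist w v.

Definition resolving (n m : nat) (R : {set gvert n m}) : Prop :=
  forall u v : gvert n m, u != v -> exists2 w, w \in R & resolves w u v.

Definition minimal_resolving (n m : nat) (R : {set gvert n m}) : Prop :=
  resolving R /\ forall v, v \in R -> ~ resolving (R :\ v).

(* Main.v *)
Require Import Defs.
From mathcomp Require Import all_boot all_order.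
From mathcomp Require Import zify.
From Stdlib Require Import Classical.
Set Implicit Arguments. Unset Strict Implicit. Unset Printing Implicit Defensive.

Definition inB (i j a b : nat) : bool := ((a <= i) && (b <= j)) || ((i < a) && (j < b)).
Definition inA (i j a b : nat) : bool := ((a <= i) && (j < b)) || ((i < a) && (b <= j)).

Definition EQ (i j k l a b : nat) : Prop := absdiff a i + absdiff b j = absdiff a k + absdiff b l.

Definition redconc (n m i j k l : nat) : Prop :=
  [\/ exists2 c, c.+2 < m & (forall a b, EQ i j k l a b -> b = c.+1),
      exists2 c, c.+2 < n & (forall a b, EQ i j k l a b -> a = c.+1),
      exists ci cj, [/\ ci.+1 < n, cj.+1 < m & forall a b, EQ i j k l a b -> ~~ inB ci cj a b]
    | exists ci cj, [/\ ci.+1 < n, cj.+1 < m & forall a b, EQ i j k l a b -> ~~ inA ci cj a b]].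

Lemma reduce_core n m i j k l : 1 < n -> 1 < m -> i < n -> j < m -> k < n -> l < m ->
  (i != k) || (j != l) -> i <= k -> redconc n m i j k l.
Proof.
move=> hn hm hi hj hk hl hne hik.
have hd := divn_eq (k - i + ((j - l) + (l - j))) 2.
have hr := ltn_pmod (k - i + ((j - l) + (l - j))) (isT : 0 < 2).
move: hd hr; set s := _ %/ 2; set r := _ %% 2 => hd hr.
have [r1|r0] : r = 1 \/ r = 0 by lia.
  apply: Or43; exists 0, 0; split => // a b; rewrite /EQ /absdiff => *; lia.
have [p0|pp] : k = i \/ i < k by lia.
  apply: Or41; exists (minn j l + s - 1); first by lia.
  move=> a b; rewrite /EQ /absdiff => *; lia.
have [q0|qq] : j = l \/ j != l by lia.
  apply: Or42; exists (i + s - 1); first by lia.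
  move=> a b; rewrite /EQ /absdiff => *; lia.
have [jl|lj] : j < l \/ l < j by lia.
  apply: Or43; exists (i + (s - (l - j))), (j + s - 1 - (s - (l - j))).
  split; first by lia.
    by lia.
  move=> a b; rewrite /EQ /absdiff /inB => *; lia.
apply: Or44; exists (i + (s - (j - l))), (j - (s - (s - (j - l)))).
split; first by lia.
  by lia.
move=> a b; rewrite /EQ /absdiff /inA => *; lia.
Qed.

Lemma reduce_nat n m i j k l : 1 < n -> 1 < m -> i < n -> j < m -> k < n -> l < m ->
  (i != k) || (j != l) -> redconc n m i j k l.
Proof.
move=> hn hm hi hj hk hl hne.
case: (leqP i k) => hik; first exact: reduce_core.
have : redconc n m k l i j.
  apply: reduce_core => //; last exact: ltnW.
  by move: hne; rewrite (eq_sym i) (eq_sym j).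
have sym a b : EQ i j k l a b -> EQ k l i j a b by rewrite /EQ => ->.
case=> [[c h1 h2]|[c h1 h2]|[ci [cj [h1 h2 h3]]]|[ci [cj [h1 h2 h3]]]].
- by apply: Or41; exists c => // a b /sym; apply: h2.
- by apply: Or42; exists c => // a b /sym; apply: h2.
- by apply: Or43; exists ci, cj; split => // a b /sym; apply: h3.
- by apply: Or44; exists ci, cj; split => // a b /sym; apply: h3.
Qed.

Definition row n m (p : gvert n m) : nat := p.1.
Definition col n m (p : gvert n m) : nat := p.2.

Definition mk (n m a b : nat) (ha : a < n) (hb : b < m) : gvert n m := (Ordinal ha, Ordinal hb).

Lemma mk_neq n m a b c d (ha : a < n) (hb : b < m) (hc : c < n) (hd : d < m) :
  (a != c) || (b != d) -> mk ha hb != mk hc hd.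
Proof.
move=> h; apply/eqP => e; move: h.
have := congr1 (fun x : gvert n m => val x.1) e; have := congr1 (fun x : gvert n m => val x.2) e.
by rewrite /= => -> ->; rewrite !eqxx.
Qed.

Lemma resB n m ci cj (h1 : ci.+1 < n) (h2 : cj.+1 < m) (w : gvert n m) :
  resolves w (mk (ltnW h1) (ltnW h2)) (mk h1 h2) = inB ci cj (row w) (col w).
Proof. rewrite /resolves /gdist /absdiff /row /col /inB /=; apply/idP/idP => ?; lia. Qed.

Lemma resA n m ci cj (h1 : ci.+1 < n) (h2 : cj.+1 < m) (w : gvert n m) :
  resolves w (mk (ltnW h1) h2) (mk h1 (ltnW h2)) = inA ci cj (row w) (col w).
Proof. rewrite /resolves /gdist /absdiff /row /col /inA /=; apply/idP/idP => ?; lia. Qed.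

Lemma resH n m c (h0 : 0 < n) (hc : c.+2 < m) (w : gvert n m) :
  resolves w (mk h0 (ltnW (ltnW hc))) (mk h0 hc) = ((col w) != c.+1 :> nat).
Proof. rewrite /resolves /gdist /absdiff /row /col /=; apply/idP/idP => ?; lia. Qed.

Lemma resV n m c (h0 : 0 < m) (hc : c.+2 < n) (w : gvert n m) :
  resolves w (mk (ltnW (ltnW hc)) h0) (mk hc h0) = ((row w) != c.+1 :> nat).
Proof. rewrite /resolves /gdist /absdiff /row /col /=; apply/idP/idP => ?; lia. Qed.

Definition redvert n m (u v : gvert n m) : Prop :=
  [\/ exists2 c, c.+2 < m & (forall w : gvert n m, ~~ resolves w u v -> (col w) = c.+1 :> nat),
      exists2 c, c.+2 < n & (forall w : gvert n m, ~~ resolves w u v -> (row w) = c.+1 :> nat),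
      exists ci cj, [/\ ci.+1 < n, cj.+1 < m & forall w : gvert n m, ~~ resolves w u v -> ~~ inB ci cj (row w) (col w)]
    | exists ci cj, [/\ ci.+1 < n, cj.+1 < m & forall w : gvert n m, ~~ resolves w u v -> ~~ inA ci cj (row w) (col w)]].

Lemma reduce_vert n m (u v : gvert n m) : 1 < n -> 1 < m -> u != v -> redvert u v.
Proof.
move=> hn hm uv.
have hne : ((row u) != (row v) :> nat) || ((col u) != (col v) :> nat).
  move: uv; case: u v => [a b] [c d]; rewrite /row /col /=; rewrite xpair_eqE negb_and.
  by case/orP => h; apply/orP; [left|right]; rewrite val_eqE.
have E w : ~~ resolves w u v -> EQ (row u) (col u) (row v) (col v) (row w) (col w) by move/negPn/eqP.
case: (reduce_nat hn hm (ltn_ord u.1) (ltn_ord u.2) (ltn_ord v.1) (ltn_ord v.2) hne)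
  => [[c h1 h2]|[c h1 h2]|[ci [cj [h1 h2 h3]]]|[ci [cj [h1 h2 h3]]]].
- by apply: Or41; exists c => // w /E; apply: h2.
- by apply: Or42; exists c => // w /E; apply: h2.
- by apply: Or43; exists ci, cj; split => // w /E; apply: h3.
- by apply: Or44; exists ci, cj; split => // w /E; apply: h3.
Qed.

Definition privR n m (R : {set gvert n m}) (p : gvert n m) : Prop :=
 [\/ exists2 c, c.+2 < m & ((col p) != c.+1 :> nat) /\ (forall q, q \in R -> q != p -> (col q) = c.+1 :> nat),
     exists2 c, c.+2 < n & ((row p) != c.+1 :> nat) /\ (forall q, q \in R -> q != p -> (row q) = c.+1 :> nat),
     exists ci cj, [/\ ci.+1 < n, cj.+1 < m, inB ci cj (row p) (col p) & forall q, q \in R -> q != p -> ~~ inB ci cj (row q) (col q)]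
   | exists ci cj, [/\ ci.+1 < n, cj.+1 < m, inA ci cj (row p) (col p) & forall q, q \in R -> q != p -> ~~ inA ci cj (row q) (col q)]].

Lemma min_priv n m (R : {set gvert n m}) p : 1 < n -> 1 < m -> minimal_resolving R -> p \in R -> privR R p.
Proof.
move=> hn hm [Rres Rmin] pR.
have [u [v [uv H]]] : exists u v, u != v /\ forall w, w \in R :\ p -> ~~ resolves w u v.
  apply: NNPP => hne; apply: (Rmin p pR) => u v uv; apply: NNPP => hno.
  apply: hne; exists u, v; split => // w hw; apply/negP => hr; apply: hno; by exists w.
have oth q : q \in R -> q != p -> ~~ resolves q u v.
  by move=> qR qp; apply: H; rewrite in_setD1 qp qR.
have h0 : 0 < n by lia.
have h0' : 0 < m by lia.
case: (reduce_vert hn hm uv) => [[c hc E]|[c hc E]|[ci [cj [h1 h2 E]]]|[ci [cj [h1 h2 E]]]].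
- have [w wR rw] := Rres _ _ (mk_neq h0 (ltnW (ltnW hc)) h0 hc ltac:(lia)).
  rewrite resH in rw.
  have wp : w = p.
    by apply/eqP; apply/negPn/negP => wp; move: rw; rewrite (E _ (oth _ wR wp)) eqxx.
  apply: Or41; exists c => //; split; first by rewrite -wp.
  by move=> q qR qp; apply: E; apply: oth.
- have [w wR rw] := Rres _ _ (mk_neq (ltnW (ltnW hc)) h0' hc h0' ltac:(lia)).
  rewrite resV in rw.
  have wp : w = p.
    by apply/eqP; apply/negPn/negP => wp; move: rw; rewrite (E _ (oth _ wR wp)) eqxx.
  apply: Or42; exists c => //; split; first by rewrite -wp.
  by move=> q qR qp; apply: E; apply: oth.
- have [w wR rw] := Rres _ _ (mk_neq (ltnW h1) (ltnW h2) h1 h2 ltac:(lia)).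
  rewrite resB in rw.
  have wp : w = p.
    by apply/eqP; apply/negPn/negP => wp; move: rw; rewrite (negbTE (E _ (oth _ wR wp))).
  apply: Or43; exists ci, cj; split => //; first by rewrite -wp.
  by move=> q qR qp; apply: E; apply: oth.
- have [w wR rw] := Rres _ _ (mk_neq (ltnW h1) h2 h1 (ltnW h2) ltac:(lia)).
  rewrite resA in rw.
  have wp : w = p.
    by apply/eqP; apply/negPn/negP => wp; move: rw; rewrite (negbTE (E _ (oth _ wR wp))).
  apply: Or44; exists ci, cj; split => //; first by rewrite -wp.
  by move=> q qR qp; apply: E; apply: oth.
Qed.

Lemma mid_col n m (R : {set gvert n m}) q x1 x2 : x1 \in R -> x2 \in R -> x1 != q -> x2 != q ->
  (col x1) = (col q) :> nat -> (col x2) = (col q) :> nat -> ((row x1) < (row q) < (row x2)) || ((row x2) < (row q) < (row x1)) -> ~ privR R q.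
Proof.
move=> x1R x2R x1q x2q e1 e2 ord.
case=> [[c hc [h1 h2]]|[c hc [h1 h2]]|[ci [cj [h1 h2 h3 h4]]]|[ci [cj [h1 h2 h3 h4]]]].
- by have := h2 _ x1R x1q; lia.
- by have := h2 _ x1R x1q; have := h2 _ x2R x2q; lia.
- by have := h4 _ x1R x1q; have := h4 _ x2R x2q; move: h3; rewrite /inB; lia.
- by have := h4 _ x1R x1q; have := h4 _ x2R x2q; move: h3; rewrite /inA; lia.
Qed.

Lemma mid_row n m (R : {set gvert n m}) q x1 x2 : x1 \in R -> x2 \in R -> x1 != q -> x2 != q ->
  (row x1) = (row q) :> nat -> (row x2) = (row q) :> nat -> ((col x1) < (col q) < (col x2)) || ((col x2) < (col q) < (col x1)) -> ~ privR R q.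
Proof.
move=> x1R x2R x1q x2q e1 e2 ord.
case=> [[c hc [h1 h2]]|[c hc [h1 h2]]|[ci [cj [h1 h2 h3 h4]]]|[ci [cj [h1 h2 h3 h4]]]].
- by have := h2 _ x1R x1q; have := h2 _ x2R x2q; lia.
- by have := h2 _ x1R x1q; lia.
- by have := h4 _ x1R x1q; have := h4 _ x2R x2q; move: h3; rewrite /inB; lia.
- by have := h4 _ x1R x1q; have := h4 _ x2R x2q; move: h3; rewrite /inA; lia.
Qed.

Ltac leaf := first [ by apply: Or31; rewrite /= ?andbT ?orbT //; lia
                   | by apply: Or32; rewrite /= ?andbT ?orbT //; lia
                   | by apply: Or33; rewrite /= ?andbT ?orbT //; lia ].
Lemma mid3 (a b c : nat) : a != b -> a != c -> b != c ->
  [\/ (b < a < c) || (c < a < b), (a < b < c) || (c < b < a) | (a < c < b) || (b < c < a)].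
Proof.
move=> h1 h2 h3.
case: (ltngtP a b) => [ab|ba|e]; last by rewrite e eqxx in h1.
- case: (ltngtP b c) => [bc|cb|e]; last by rewrite e eqxx in h3.
  + leaf.
  + case: (ltngtP a c) => [ac|ca|e]; last by rewrite e eqxx in h2.
    * leaf.
    * leaf.
- case: (ltngtP a c) => [ac|ca|e]; last by rewrite e eqxx in h2.
  + leaf.
  + case: (ltngtP b c) => [bc|cb|e]; last by rewrite e eqxx in h3.
    * leaf.
    * leaf.
Qed.

Lemma vneq2 n m (x y : gvert n m) : x != y -> col x = col y -> row x != row y.
Proof.
move=> xy e; apply: contra xy => /eqP e1; apply/eqP; move: x y e e1 => [a b] [c d]; rewrite /row /col /= => e e1.
by congr pair; apply: val_inj.
Qed.

Lemma vneq1 n m (x y : gvert n m) : x != y -> row x = row y -> col x != col y.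
Proof.
move=> xy e; apply: contra xy => /eqP e1; apply/eqP; move: x y e e1 => [a b] [c d]; rewrite /row /col /= => e e1.
by congr pair; apply: val_inj.
Qed.

Lemma three_col n m (R : {set gvert n m}) x y z :
  x \in R -> y \in R -> z \in R -> x != y -> x != z -> y != z ->
  col x = col y -> col x = col z -> privR R x -> privR R y -> privR R z -> False.
Proof.
move=> xR yR zR xy xz yz e1 e2 px py pz.
have h1 := vneq2 xy e1. have h2 := vneq2 xz e2.
have h3 : row y != row z by apply: vneq2 => //; rewrite -e1 e2.
case: (mid3 h1 h2 h3) => o.
- by apply: (mid_col yR zR _ _ _ _ o) px; rewrite // eq_sym.
- by apply: (mid_col xR zR _ _ _ _ o) py; rewrite // ?(eq_sym z) // -e2 e1.
- by apply: (mid_col xR yR _ _ _ _ o) pz; rewrite // -e1 e2.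
Qed.

Lemma three_row n m (R : {set gvert n m}) x y z :
  x \in R -> y \in R -> z \in R -> x != y -> x != z -> y != z ->
  row x = row y -> row x = row z -> privR R x -> privR R y -> privR R z -> False.
Proof.
move=> xR yR zR xy xz yz e1 e2 px py pz.
have h1 := vneq1 xy e1. have h2 := vneq1 xz e2.
have h3 : col y != col z by apply: vneq1 => //; rewrite -e1 e2.
case: (mid3 h1 h2 h3) => o.
- by apply: (mid_row yR zR _ _ _ _ o) px; rewrite // eq_sym.
- by apply: (mid_row xR zR _ _ _ _ o) py; rewrite // ?(eq_sym z) // -e2 e1.
- by apply: (mid_row xR yR _ _ _ _ o) pz; rewrite // -e1 e2.
Qed.

Lemma three_distinct (T : finType) (A : {set T}) : 2 < #|A| ->
  exists x y z, [/\ x \in A, y \in A, z \in A & [/\ x != y, x != z & y != z]].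
Proof.
move=> hA.
have /set0Pn [x xA] : A != set0 by rewrite -card_gt0; lia.
have hA1 : 1 < #|A :\ x| by move: hA; rewrite (cardsD1 x) xA; lia.
have /set0Pn [y yA] : A :\ x != set0 by rewrite -card_gt0; lia.
have hA2 : 0 < #|A :\ x :\ y| by move: hA1; rewrite (cardsD1 y (A :\ x)) yA; lia.
have /set0Pn [z zA] : A :\ x :\ y != set0 by rewrite -card_gt0.
move: yA zA; rewrite !in_setD1 => /andP[yx yA] /and3P[zy zx zA].
by exists x, y, z; split => //; split; rewrite // eq_sym.
Qed.

Definition Qr (t : bool) (i j a b : nat) : bool := if t then inB i j a b else inA i j a b.
Definition Qs (t : bool) (j : nat) (s : bool) (b : nat) : bool :=
  if s then (if t then b <= j else j < b) else (if t then j < b else b <= j).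

Lemma QrE t i j a b : Qr t i j a b = Qs t j (a <= i) b.
Proof. rewrite /Qr /Qs /inB /inA; case: t; case: (leqP a i) => h /=; rewrite ?andbT ?orbF ?andbF //; apply/idP/idP; lia. Qed.

Lemma fourQ (tx ty tz sx sy sz sw : bool) (jx jy jz x y z w : nat) :
  Qs tx jx sx x -> ~~ Qs tx jx sy y -> ~~ Qs tx jx sz z -> ~~ Qs tx jx sw w ->
  Qs ty jy sy y -> ~~ Qs ty jy sx x -> ~~ Qs ty jy sz z -> ~~ Qs ty jy sw w ->
  Qs tz jz sz z -> ~~ Qs tz jz sx x -> ~~ Qs tz jz sy y -> ~~ Qs tz jz sw w -> False.
Proof.
by case: tx; case: ty; case: tz; case: sx; case: sy; case: sz; case: sw; rewrite /Qs /= -?ltnNge -?leqNgt; lia.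
Qed.

Definition privAt n m (R : {set gvert n m}) (i j : nat) (t : bool) (p : gvert n m) : bool :=
  Qr t i j (row p) (col p) && [forall q in R, (q != p) ==> ~~ Qr t i j (row q) (col q)].

Definition Pset n m (R : {set gvert n m}) (i : nat) : {set gvert n m} :=
  [set p in R | [exists j : 'I_m, [exists t : bool, privAt R i j t p]]].

Lemma Pset_le2 n m (R : {set gvert n m}) i : 3 < #|R| -> #|Pset R i| <= 2.
Proof.
move=> h4; rewrite leqNgt; apply/negP => /three_distinct [x [y [z [xP yP zP [xy xz yz]]]]].
have sub : Pset R i \subset R by apply/subsetP => p; rewrite inE => /andP[].
have xR := subsetP sub _ xP; have yR := subsetP sub _ yP; have zR := subsetP sub _ zP.
have yR1 : y \in R :\ x by rewrite in_setD1 (eq_sym y x) xy yR.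
have zR2 : z \in R :\ x :\ y by rewrite !in_setD1 (eq_sym z y) (eq_sym z x) yz xz zR.
have : 0 < #|R :\ x :\ y :\ z|.
  by move: h4; rewrite (cardsD1 x R) xR (cardsD1 y (R :\ x)) yR1 (cardsD1 z (R :\ x :\ y)) zR2; lia.
rewrite card_gt0 => /set0Pn [w]; rewrite !in_setD1 => /and4P[wz wy wx wR].
move: xP; rewrite inE => /andP[_ /existsP[jx /existsP[tx /andP[qx /forall_inP fx]]]].
move: yP; rewrite inE => /andP[_ /existsP[jy /existsP[ty /andP[qy /forall_inP fy]]]].
move: zP; rewrite inE => /andP[_ /existsP[jz /existsP[tz /andP[qz /forall_inP fz]]]].
apply: (@fourQ tx ty tz (row x <= i) (row y <= i) (row z <= i) (row w <= i) jx jy jz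
   (col x) (col y) (col z) (col w)); rewrite -QrE //.
- by apply: (implyP (fx _ yR)); rewrite eq_sym.
- by apply: (implyP (fx _ zR)); rewrite eq_sym.
- by apply: (implyP (fx _ wR)).
- by apply: (implyP (fy _ xR)).
- by apply: (implyP (fy _ zR)); rewrite eq_sym.
- by apply: (implyP (fy _ wR)).
- by apply: (implyP (fz _ xR)).
- by apply: (implyP (fz _ yR)).
- by apply: (implyP (fz _ wR)).
Qed.

Definition Uk n m (R : {set gvert n m}) k :=
  [set p in R | [exists i : 'I_n, (i < k) && (p \in Pset R i)]].

Lemma Uk_card n m (R : {set gvert n m}) k : 3 < #|R| -> #|Uk R k| <= 2 * k.
Proof.
move=> h4; elim: k => [|k IH].
  rewrite leqn0 cards_eq0; apply/eqP/setP => p; rewrite /Uk !inE; apply/negP.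
  by move=> /andP[_ /existsP[i /andP[]]]; rewrite ltn0.
have sub : Uk R k.+1 \subset Uk R k :|: Pset R k.
  apply/subsetP => p /setIdP [pR /existsP[i /andP[ik pP]]]; apply/setUP.
  rewrite ltnS leq_eqVlt in ik; case/orP: ik => [/eqP e|ik].
  - by right; rewrite -e.
  - by left; apply/setIdP; split => //; apply/existsP; exists i; rewrite ik pP.
apply: leq_trans (subset_leq_card sub) _; apply: leq_trans (leq_card_setU _ _).1 _.
have := @Pset_le2 _ _ R k h4; lia.
Qed.

Lemma upper n m (R : {set gvert n m}) : 3 <= n -> n <= m -> minimal_resolving R -> #|R| <= 2 * n - 2.
Proof.
move=> hn hnm hR; have hn1 : 1 < n by lia. have hm1 : 1 < m by lia.
case: (leqP #|R| 3) => [h|h4]; first lia.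
have pv p : p \in R -> privR R p by move=> pR; exact: min_priv.
have cov : R \subset Uk R n.-1.
  apply/subsetP => p pR; rewrite /Uk inE pR /=.
  case: (pv p pR) => [[c hc [h1 h2]]|[c hc [h1 h2]]|[ci [cj [h1 h2 h3 h4']]]|[ci [cj [h1 h2 h3 h4']]]].
  - exfalso. have : 2 < #|R :\ p| by move: h4; rewrite (cardsD1 p) pR; lia.
    case/three_distinct => [x [y [z [xP yP zP [xy xz yz]]]]].
    move: xP yP zP; rewrite !in_setD1 => /andP[xp xR] /andP[yp yR] /andP[zp zR].
    apply: (three_col xR yR zR xy xz yz _ _ (pv x xR) (pv y yR) (pv z zR)).
      by rewrite (h2 x xR xp) (h2 y yR yp).
    by rewrite (h2 x xR xp) (h2 z zR zp).
  - exfalso. have : 2 < #|R :\ p| by move: h4; rewrite (cardsD1 p) pR; lia.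
    case/three_distinct => [x [y [z [xP yP zP [xy xz yz]]]]].
    move: xP yP zP; rewrite !in_setD1 => /andP[xp xR] /andP[yp yR] /andP[zp zR].
    apply: (three_row xR yR zR xy xz yz _ _ (pv x xR) (pv y yR) (pv z zR)).
      by rewrite (h2 x xR xp) (h2 y yR yp).
    by rewrite (h2 x xR xp) (h2 z zR zp).
  - apply/existsP; exists (Ordinal (ltnW h1)); apply/andP; split; first by rewrite /=; lia.
    rewrite /Pset inE pR /=; apply/existsP; exists (Ordinal (ltnW h2)); apply/existsP; exists true.
    rewrite /privAt /Qr /= h3 /=; apply/forall_inP => q qR; apply/implyP => qp; exact: h4' q qR qp.
  - apply/existsP; exists (Ordinal (ltnW h1)); apply/andP; split; first by rewrite /=; lia.
    rewrite /Pset inE pR /=; apply/existsP; exists (Ordinal (ltnW h2)); apply/existsP; exists false.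
    rewrite /privAt /Qr /= h3 /=; apply/forall_inP => q qR; apply/implyP => qp; exact: h4' q qR qp.
apply: leq_trans (subset_leq_card cov) _; apply: leq_trans (@Uk_card _ _ R n.-1 h4) _; lia.
Qed.

Lemma resolving_of n m (S : {set gvert n m}) : 1 < n -> 1 < m ->
 (forall c, c.+2 < m -> exists2 w, w \in S & col w != c.+1) ->
 (forall c, c.+2 < n -> exists2 w, w \in S & row w != c.+1) ->
 (forall ci cj, ci.+1 < n -> cj.+1 < m -> exists2 w, w \in S & inB ci cj (row w) (col w)) ->
 (forall ci cj, ci.+1 < n -> cj.+1 < m -> exists2 w, w \in S & inA ci cj (row w) (col w)) ->
 resolving S.
Proof.
move=> hn hm HH HV HB HA u v uv.
case: (reduce_vert hn hm uv) => [[c hc E]|[c hc E]|[ci [cj [h1 h2 E]]]|[ci [cj [h1 h2 E]]]].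
- have [w wS hw] := HH c hc; exists w => //.
  by case rw: (resolves w u v) => //; move/negbT: rw => /E e; rewrite e eqxx in hw.
- have [w wS hw] := HV c hc; exists w => //.
  by case rw: (resolves w u v) => //; move/negbT: rw => /E e; rewrite e eqxx in hw.
- have [w wS hw] := HB ci cj h1 h2; exists w => //.
  by case rw: (resolves w u v) => //; move/negbT: rw => /E; rewrite hw.
- have [w wS hw] := HA ci cj h1 h2; exists w => //.
  by case rw: (resolves w u v) => //; move/negbT: rw => /E; rewrite hw.
Qed.

Lemma notres_A n m (S : {set gvert n m}) p ci cj : ci.+1 < n -> cj.+1 < m ->
  (forall q, q \in S -> q != p -> ~~ inA ci cj (row q) (col q)) -> ~ resolving (S :\ p).
Proof.
move=> h1 h2 H res; have [w] := res _ _ (mk_neq (ltnW h1) h2 h1 (ltnW h2) ltac:(lia)).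
by rewrite in_setD1 resA => /andP[wp wS]; rewrite (negbTE (H w wS wp)).
Qed.

Lemma notres_B n m (S : {set gvert n m}) p ci cj : ci.+1 < n -> cj.+1 < m ->
  (forall q, q \in S -> q != p -> ~~ inB ci cj (row q) (col q)) -> ~ resolving (S :\ p).
Proof.
move=> h1 h2 H res; have [w] := res _ _ (mk_neq (ltnW h1) (ltnW h2) h1 h2 ltac:(lia)).
by rewrite in_setD1 resB => /andP[wp wS]; rewrite (negbTE (H w wS wp)).
Qed.

Definition stair (n' m' : nat) (x : 'I_n' * bool) : gvert n'.+1 m'.+1 :=
  (inord x.1, inord (if x.2 then (if x.1.+1 == n' then m' else x.1.+1) else x.1)).
Arguments stair : clear implicits.

Lemma stair_row n' m' x : row (stair n' m' x) = x.1.
Proof. rewrite /row /stair /= inordK //; exact: ltnW (ltn_ord _). Qed.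

Lemma stair_col n' m' x : n' <= m' ->
  col (stair n' m' x) = (if x.2 then (if x.1.+1 == n' then m' else x.1.+1) else x.1).
Proof.
move=> h; rewrite /col /stair /= inordK //; have := ltn_ord x.1.
by case: x.2; case: (x.1.+1 =P n') => /= ? ?; lia.
Qed.

Lemma stair_inj n' m' : n' <= m' -> injective (stair n' m').
Proof.
move=> h [r b] [r' b'] e.
have e1 := congr1 (@row _ _) e; have e2 := congr1 (@col _ _) e.
rewrite !stair_row /= in e1; rewrite !stair_col //= in e2.
have er : r = r' by apply: val_inj.
subst r'; congr pair; move: e2; clear e e1; have := ltn_ord r.
by case: b; case: b' => //; case: (r.+1 =P n') => /= ? ? ?; lia.
Qed.

Lemma stair_ne n' m' (r r' : 'I_n') (b b' : bool) :
  stair n' m' (r', b') != stair n' m' (r, b) -> ((r' : nat) != r) || (b' != b).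
Proof.
move=> qp; rewrite -negb_and; apply: (contra _ qp) => /andP[/eqP e1 /eqP e2].
by rewrite e2 (val_inj e1) eqxx.
Qed.

Unset Implicit Arguments.

Theorem theorem5 (n m : nat) :
  3 <= n -> n <= m ->
  (forall R : {set gvert n m}, minimal_resolving R -> #|R| <= 2 * n - 2) /\
  (exists R : {set gvert n m}, minimal_resolving R /\ #|R| = 2 * n - 2).
Proof.
move=> hn hnm; split; first by move=> R hR; exact: upper hn hnm hR.
case: n hn hnm => [|n'] // hn; case: m => [|m'] // hnm.
have h : n' <= m' by lia.
have h0 : 0 < n' by lia.
set S := stair n' m' @: setT.
have memS x : stair n' m' x \in S by apply: imset_f.
exists S; split; last first.
  rewrite card_imset; last exact: stair_inj.
  by rewrite cardsT card_prod card_ord card_bool; lia.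
split.
  apply: resolving_of; try lia.
  - move=> c hc; exists (stair n' m' (Ordinal h0, false)) => //.
    by rewrite stair_col.
  - move=> c hc; exists (stair n' m' (Ordinal h0, false)) => //.
    by rewrite stair_row.
  - move=> ci cj h1 h2; exists (stair n' m' (Ordinal h0, false)) => //.
    by rewrite stair_row stair_col.
  - move=> ci cj h1 h2.
    have hci : ci < n' by lia.
    case: (ci.+1 =P n') => [e|ne].
      exists (stair n' m' (Ordinal hci, true)) => //.
      rewrite stair_row stair_col //= e eqxx /inA; lia.
    case: (leqP cj ci) => hcj.
      exists (stair n' m' (Ordinal hci, true)) => //.
      rewrite stair_row stair_col //=; case: eqP => // _; rewrite /inA; lia.
    have hci1 : ci.+1 < n' by lia.
    exists (stair n' m' (Ordinal hci1, false)) => //.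
    rewrite stair_row stair_col //= /inA; lia.
move=> p /imsetP [[r b] _ ->].
have hr := ltn_ord r.
case: b.
  apply: (@notres_A _ _ S _ r r); try lia.
  move=> q /imsetP [[r' b'] _ ->] /stair_ne ne.
  have hr' := ltn_ord r'.
  rewrite stair_row stair_col //= /inA.
  by move: ne; case: b' => /=; [case: (r'.+1 =P n') => ? |]; lia.
have [r0|rpos] : (r : nat) = 0 \/ 0 < r by lia.
  apply: (@notres_B _ _ S _ n'.-1 0); try lia.
  move=> q /imsetP [[r' b'] _ ->] /stair_ne ne.
  have hr' := ltn_ord r'.
  rewrite stair_row stair_col //= /inB.
  by move: ne; case: b' => /=; [case: (r'.+1 =P n') => ? |]; lia.
apply: (@notres_A _ _ S _ r.-1 r); try lia.
move=> q /imsetP [[r' b'] _ ->] /stair_ne ne.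
have hr' := ltn_ord r'.
rewrite stair_row stair_col //= /inA.
by move: ne; case: b' => /=; [case: (r'.+1 =P n') => ? |]; lia.
Qed.
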